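(* Fix a prompt $q$ and a policy $\pi_k$, and assume $1-\rho^+(q)-\rho^-(q)\neq 0$. Let $n\ge2$ and let $(o_i,\xi_i)_{i=1}^n$ be i.i.d. with $o_i\sim\pi_k(\cdot\mid q)$ and $\xi_i\sim U[0,1]$ independent of $o_i$. Let $\hat r_i=\hat r(q,o_i,\xi_i)$, $\bar r(q)=\frac1n\sum_{i=1}^n\hat r_i$, $\widehat{\mathrm{Var}}=\frac1{n-1}\sum_{i=1}^n(\hat r_i-\bar r(q))^2$, and \[ Z=\widehat{\mathrm{Var}}-\frac{\bar r(q)\,\rho^-(q)(1-\rho^-(q))}{(1-\rho^+(q)-\rho^-(q))^2}-\frac{(1-\bar r(q))\,\rho^+(q)(1-\rho^+(q))}{(1-\rho^+(q)-\rho^-(q))^2}. \] Then $\mathbb E[Z]=p_{\pi_k}(q)(1-p_{\pi_k}(q))=\mathrm{Var}_{o\sim\pi_k(\cdot\mid q)}(r^*(q,o))$, and $Z\to p_{\pi_k}(q)(1-p_{\pi_k}(q))$ almost surely as $n\to\infty$ (i.e. $Z$ is an unbiased and consistent estimator of the true reward variance).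
   Context: Setting: $\mathcal O$ is a countable set of responses; $r^*:\mathcal Q\times\mathcal O\to\{0,1\}$ is the true binary reward; $p_\pi(q)=\mathbb E_{o\sim\pi(\cdot\mid q)}[r^*(q,o)]$. Noise model: flip rates $\rho^+(q),\rho^-(q)\in[0,1]$; for $\xi\in[0,1]$ the observed reward is $\tilde r(q,o,\xi)=(1-r^*(q,o))\mathbf 1_{\{\xi\le\rho^+(q)\}}+r^*(q,o)\mathbf 1_{\{\xi\le 1-\rho^-(q)\}}$. The corrected reward is $\hat r(q,o,\xi)=\dfrac{\tilde r(q,o,\xi)-\rho^+(q)}{1-\rho^+(q)-\rho^-(q)}$. *)

(* Defs.v *)
From HB Require Import structures.
From mathcomp Require Import all_boot all_order all_algebra.
From mathcomp Require Import all_classical all_reals all_analysis.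
Set Implicit Arguments. Unset Strict Implicit. Unset Printing Implicit Defensive.
Import Order.TTheory GRing.Theory Num.Theory.
Local Open Scope classical_set_scope.
Local Open Scope ring_scope.

Section Defs.
Context {R : realType} {O : countType}.

Definition is_pmf (pq : O -> R) : Prop :=
  (forall o, 0 <= pq o) /\ (\esum_(o in [set: O]) (pq o)%:E = 1%E).

Definition success_prob (pq : O -> R) (rs : O -> bool) : R :=
  fine (\esum_(o in [set: O]) ((pq o) * (rs o)%:R)%:E).

Definition obs_reward (rs : O -> bool) (rhop rhom : R) (o : O) (xi : R) : R :=
  (1 - (rs o)%:R) * ((xi <= rhop)%R)%:R + (rs o)%:R * ((xi <= 1 - rhom)%R)%:R.

Definition corr_reward (rs : O -> bool) (rhop rhom : R) (o : O) (xi : R) : R :=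
  (obs_reward rs rhop rhom o xi - rhop) / (1 - rhop - rhom).

Definition rbar (rs : O -> bool) (rhop rhom : R) (n : nat)
    (o : nat -> O) (xi : nat -> R) : R :=
  n%:R^-1 * \sum_(i < n) corr_reward rs rhop rhom (o i) (xi i).

Definition var_hat (rs : O -> bool) (rhop rhom : R) (n : nat)
    (o : nat -> O) (xi : nat -> R) : R :=
  (n.-1)%:R^-1 * \sum_(i < n)
     (corr_reward rs rhop rhom (o i) (xi i) - rbar rs rhop rhom n o xi) ^+ 2.

Definition Z_est (rs : O -> bool) (rhop rhom : R) (n : nat)
    (o : nat -> O) (xi : nat -> R) : R :=
  var_hat rs rhop rhom n o xi
  - rbar rs rhop rhom n o xi * rhom * (1 - rhom) / (1 - rhop - rhom) ^+ 2
  - (1 - rbar rs rhop rhom n o xi) * rhop * (1 - rhop) / (1 - rhop - rhom) ^+ 2.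

End Defs.

(* The samples (o_i, xi_i)_{i in nat} on a probability space (T, P):
   o_i ~ pq, xi_i ~ U[0,1], and the whole family {o_0, xi_0, o_1, xi_1, ...}
   is mutually independent (equivalently: the pairs are i.i.d. and xi_i is
   independent of o_i).  Mutual independence is stated as the product rule for
   the events of the first n pairs, for every n (choosing A i = setT or
   B i = setT gives every finite subfamily). *)
Definition iid_samples {d} {T : measurableType d} {R : realType} {O : countType}
    (P : probability T R) (pq : O -> R)
    (o : nat -> T -> O) (xi : nat -> T -> R) : Prop :=
  [/\ (forall i (a : O), measurable (o i @^-1` [set a])),
      (forall i, measurable_fun [set: T] (xi i)),
      (forall i (a : O), P (o i @^-1` [set a]) = (pq a)%:E),
      (forall i (B : set R), measurable B ->
         P (xi i @^-1` B) = lebesgue_measure (B `&` `[0%R, 1%R]%classic)) &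
      (forall n (A : nat -> set O) (B : nat -> set R), (forall i, measurable (B i)) ->
         P (\bigcap_(i in `I_n) (o i @^-1` A i `&` xi i @^-1` B i)) =
         (\prod_(i < n) (P (o i @^-1` A i) * P (xi i @^-1` B i)))%E)].

(* Main.v *)
Require Import Defs.
From HB Require Import structures.
From mathcomp Require Import all_boot all_order all_algebra.
From mathcomp Require Import all_classical all_reals all_analysis.
From mathcomp Require Import ring lra.
Import Order.TTheory GRing.Theory Num.Theory numFieldNormedType.Exports.
Local Open Scope classical_set_scope.
Local Open Scope ring_scope.
Set Implicit Arguments. Unset Strict Implicit. Unset Printing Implicit Defensive.
Section Alg.
Variables (R : realType) (mu : R).
Definition wt (b : bool) : R := if b then mu else 1 - mu.
Definition Wf n (s : {ffun 'I_n -> bool}) : R := \prod_i wt (s i).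
Definition Kf n (s : {ffun 'I_n -> bool}) : R := \sum_i (s i)%:R.

Lemma sum_prodF n (F : 'I_n -> bool -> R) :
  \sum_(s : {ffun 'I_n -> bool}) \prod_i F i (s i) = \prod_i (F i true + F i false).
Proof.
rewrite -bigA_distr_bigA /=.
by apply: eq_bigr => i _; rewrite big_bool.
Qed.

Lemma prod_if1 n (i : 'I_n) (f : 'I_n -> R) :
  \prod_k (if k == i then f k else 1) = f i.
Proof. by rewrite -big_mkcond big_pred1_eq. Qed.

Lemma sumW n : \sum_(s : {ffun 'I_n -> bool}) Wf s = 1.
Proof.
rewrite (sum_prodF (fun _ b => wt b)) big1 // => i _ /=; rewrite addrC subrK.
by [].
Qed.

Lemma sumKW n : \sum_(s : {ffun 'I_n -> bool}) Kf s * Wf s = n%:R * mu.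
Proof.
transitivity (\sum_(i < n) \sum_(s : {ffun 'I_n -> bool})
   \prod_k ((if k == i then (s k)%:R else 1) * wt (s k))).
  rewrite exchange_big /=; apply: eq_bigr => s _; symmetry.
  rewrite /Kf mulr_suml; apply: eq_bigr => i _.
  by rewrite big_split /= prod_if1.
transitivity (\sum_(i < n) mu); last by rewrite sumr_const card_ord mulr_natl.
apply: eq_bigr => i _.
rewrite (sum_prodF (fun k b => (if k == i then b%:R else 1) * wt b)).
rewrite -[X in _ = X](prod_if1 i (fun _ => mu)).
apply: eq_bigr => k _; case: (k == i) => /=; rewrite ?mul1r ?mul0r ?addr0 //.
by rewrite addrC subrK.
Qed.

Lemma prod_if2 n (i j : 'I_n) :
  \prod_k (if (k == i) || (k == j) then mu else 1) = if i == j then mu else mu ^+ 2.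
Proof.
case: eqVneq => [<-|ij].
  by under eq_bigr do rewrite orbb; rewrite prod_if1.
rewrite (bigD1 i) //= (eq_refl i) /= (bigD1 j) /=; last by rewrite eq_sym.
rewrite (eq_refl j) orbT big1 ?mulr1 ?expr2 //.
by move=> k /andP[ki kj]; rewrite (negbTE ki) (negbTE kj).
Qed.

Lemma sumK2W n : \sum_(s : {ffun 'I_n -> bool}) Kf s ^+ 2 * Wf s =
  n%:R * mu + n%:R * (n%:R - 1) * mu ^+ 2.
Proof.
transitivity (\sum_(i < n) \sum_(j < n) \sum_(s : {ffun 'I_n -> bool})
   \prod_k ((if k == i then (s k)%:R else 1) * (if k == j then (s k)%:R else 1)
      * wt (s k))).
  symmetry.
  rewrite (eq_bigr (fun i => \sum_(s : {ffun 'I_n -> bool}) \sum_(j < n)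
   \prod_k ((if k == i then (s k)%:R else 1) * (if k == j then (s k)%:R else 1)
      * wt (s k)))); last by move=> i _; exact: exchange_big.
  rewrite exchange_big /=; apply: eq_bigr => s _; symmetry.
  rewrite /Kf expr2 -mulrA mulr_suml; apply: eq_bigr => i _.
  rewrite mulr_suml mulr_sumr; apply: eq_bigr => j _.
  rewrite !big_split /= !prod_if1 /Wf; ring.
transitivity (\sum_(i < n) \sum_(j < n) (if i == j then mu else mu ^+ 2)).
  apply: eq_bigr => i _; apply: eq_bigr => j _.
  rewrite (sum_prodF (fun k b => (if k == i then b%:R else 1) * (if k == j then b%:R else 1) * wt b)).
  rewrite -prod_if2; apply: eq_bigr => k _.
  by case: (k == i); case: (k == j) => /=; rewrite ?mul1r ?mul0r ?mulr0 ?mulr1 ?addr0 ?(addrC mu) ?subrK.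
transitivity (\sum_(i < n) (mu ^+ 2 * n%:R + (mu - mu ^+ 2))).
  apply: eq_bigr => i _.
  rewrite (bigD1 i) //= eqxx.
  rewrite (eq_bigr (fun _ => mu ^+ 2)); last by move=> j /negbTE; rewrite eq_sym => ->.
  rewrite sumr_const /= cardC1 card_ord /= -mulr_natr.
  case: n i => [[]//|n] i /=.
  by rewrite mulrSr; ring.
rewrite sumr_const card_ord -mulr_natl; ring.
Qed.

Lemma sum_expW n (t : R) :
  \sum_(s : {ffun 'I_n -> bool}) expR (t * (Kf s - n%:R * mu)) * Wf s =
  (mu * expR (t * (1 - mu)) + (1 - mu) * expR (- (t * mu))) ^+ n.
Proof.
transitivity (\sum_(s : {ffun 'I_n -> bool}) \prod_i
   (expR (t * ((s i)%:R - mu)) * wt (s i))).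
  apply: eq_bigr => s _; rewrite big_split /=; congr (_ * _).
  rewrite -expR_sum; congr expR.
  rewrite -mulr_sumr /Kf sumrB sumr_const card_ord mulr_natl //.
rewrite (sum_prodF (fun i b => expR (t * (b%:R - mu)) * wt b)).
rewrite prodr_const card_ord /=; congr (_ ^+ _).
rewrite sub0r mulrN; ring.
Qed.
End Alg.
Arguments Kf {R n} s.
Section Tail.
Variables (R : realType).

Lemma expR_le_quad (u : R) : u <= 1/2 -> expR u <= 1 + u + 2 * u ^+ 2.
Proof.
move=> hu.
have h1 : 1 - u <= expR (- u) by exact: expR_ge1Dx.
have hpos : 0 < 1 - u by lra.
have -> : expR u = (expR (- u))^-1 by rewrite expRN invrK.
rewrite -(@ler_pM2l _ (expR (- u))) ?expR_gt0 // mulfV ?gt_eqF ?expR_gt0 //.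
apply: (le_trans _ (ler_wpM2r _ h1)); last by nra.
nra.
Qed.

Lemma mgf_bound (mu t : R) : 0 <= mu <= 1 -> `|t| <= 1/2 ->
  mu * expR (t * (1 - mu)) + (1 - mu) * expR (- (t * mu)) <= 1 + 2 * t ^+ 2.
Proof.
move=> /andP[m0 m1]; rewrite ler_norml => /andP[ta tb].
have e1 := expR_le_quad (_ : t * (1 - mu) <= 1/2).
have e2 := expR_le_quad (_ : - (t * mu) <= 1/2).
have h1 : t * (1 - mu) <= 1/2 by nra.
have h2 : - (t * mu) <= 1/2 by nra.
have {}e1 := e1 h1; have {}e2 := e2 h2.
have a1 := ler_wpM2l m0 e1.
have m0' : 0 <= 1 - mu by lra.
have a2 := ler_wpM2l m0' e2.
apply: le_trans (lerD a1 a2) _.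
have : 0 <= t ^+ 2 by rewrite sqr_ge0.
nra.
Qed.
End Tail.
Section TailB.
Variables (R : realType).

Lemma Wf_ge0 (mu : R) n (s : {ffun 'I_n -> bool}) : 0 <= mu <= 1 -> 0 <= Wf mu s.
Proof.
move=> /andP[m0 m1]; apply: prodr_ge0 => i _; rewrite /wt; case: (s i) => //.
by rewrite subr_ge0.
Qed.

Definition rr (e : R) := (1 + e ^+ 2 / 8) / (1 + e ^+ 2 / 4).

Lemma tail n (e mu : R) : (0 < n)%N -> 0 < e <= 1 -> 0 <= mu <= 1 ->
  \sum_(s : {ffun 'I_n -> bool}) (if e <= `|Kf s / n%:R - mu| then 1 else 0) * Wf mu s
  <= 2 * rr e ^+ n.
Proof.
move=> n0 /andP[e0 e1] hmu.
pose t := e / 4.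
have t0 : 0 < t by rewrite /t divr_gt0.
have n0' : 0 < n%:R :> R by rewrite ltr0n.
pose E := expR (- (n%:R * (t * e))).
have step : forall s : {ffun 'I_n -> bool},
   (if e <= `|Kf s / n%:R - mu| then 1 else 0) * Wf mu s <=
   E * (expR (t * (Kf s - n%:R * mu)) * Wf mu s +
        expR (- t * (Kf s - n%:R * mu)) * Wf mu s).
  move=> s; rewrite -mulrDl mulrA; apply: ler_wpM2r; first exact: Wf_ge0.
  case: ifP => [he|_]; last first.
    by apply: mulr_ge0; [exact: expR_ge0| apply: addr_ge0; exact: expR_ge0].
  rewrite mulrDr /E -!expRD.
  have hx : n%:R * e <= `|Kf s - n%:R * mu|.
    have -> : Kf s - n%:R * mu = n%:R * (Kf s / n%:R - mu).
      by field; rewrite gt_eqF.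
    by rewrite normrM (ger0_norm (ltW n0')) (ler_pM2l n0').
  move: hx; rewrite ler_normr => /orP[] hx.
  - have h : 0 <= - (n%:R * (t * e)) + t * (Kf s - n%:R * mu) by nra.
    have h1 := expR_ge1Dx (- (n%:R * (t * e)) + t * (Kf s - n%:R * mu)).
    have h2 := expR_ge0 (- (n%:R * (t * e)) + - t * (Kf s - n%:R * mu)).
    lra.
  - have h : 0 <= - (n%:R * (t * e)) + - t * (Kf s - n%:R * mu) by nra.
    have h1 := expR_ge1Dx (- (n%:R * (t * e)) + - t * (Kf s - n%:R * mu)).
    have h2 := expR_ge0 (- (n%:R * (t * e)) + t * (Kf s - n%:R * mu)).
    lra.
apply: le_trans (ler_sum _ (fun s _ => step s)) _.
rewrite -mulr_sumr big_split /= (sum_expW mu n t) (sum_expW mu n (- t)).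
set m1 := _ * _ + _ * _.
set m2 := (X in _ + X ^+ n).
have hmu' := hmu; move: hmu' => /andP[m0 m1'].
have b1 : m1 <= 1 + 2 * t ^+ 2.
  apply: mgf_bound => //; rewrite ger0_norm ?ltW // /t; lra.
have b2 : m2 <= 1 + 2 * t ^+ 2.
  rewrite /m2 -(sqrrN t); apply: mgf_bound => //.
  rewrite normrN ger0_norm ?ltW // /t; lra.
have m1p : 0 <= m1 by rewrite /m1; apply: addr_ge0; apply: mulr_ge0; rewrite ?subr_ge0 ?expR_ge0.
have m2p : 0 <= m2 by rewrite /m2; apply: addr_ge0; apply: mulr_ge0; rewrite ?subr_ge0 ?expR_ge0.
have dp : 0 <= 1 + 2 * t ^+ 2 by rewrite addr_ge0 // mulr_ge0 // sqr_ge0.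
have c1 : m1 ^+ n <= (1 + 2 * t ^+ 2) ^+ n by apply: lerXn2r; rewrite ?nnegrE.
have c2 : m2 ^+ n <= (1 + 2 * t ^+ 2) ^+ n by apply: lerXn2r; rewrite ?nnegrE.
have te0 : 0 < 1 + t * e by rewrite addr_gt0 // mulr_gt0.
have hE : E <= ((1 + t * e)^-1) ^+ n.
  rewrite /E -mulrN expRM_natl; apply: lerXn2r; rewrite ?nnegrE ?expR_ge0 ?invr_ge0 ?(ltW te0) //.
  rewrite expRN lef_pV2 ?posrE ?expR_gt0 //; exact: expR_ge1Dx.
have E0 : 0 <= E by exact: expR_ge0.
apply: (le_trans (ler_wpM2l E0 (lerD c1 c2))).
apply: (le_trans (ler_wpM2r _ hE)); first by rewrite addr_ge0 // exprn_ge0.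
have -> : rr e = (1 + t * e)^-1 * (1 + 2 * t ^+ 2).
  by rewrite /rr /t; field; apply/lt0r_neq0; nra.
rewrite [X in _ <= 2 * X]GRing.exprMn; set cc := _^-1 ^+ n; set dd := _ ^+ n; lra.
Qed.
End TailB.
Section Prob.
Context {R : realType} {d : measure_display} {T : measurableType d}
  (P : probability T R) {O : countType} (pq : O -> R)
  (o : nat -> T -> O) (xi : nat -> T -> R).
Hypothesis mo1 : forall i (x : O), measurable (o i @^-1` [set x]).
Hypothesis Po1 : forall i (x : O), P (o i @^-1` [set x]) = (pq x)%:E.
Hypothesis pq0 : forall x, 0 <= pq x.

Lemma mo i (A : set O) : measurable (o i @^-1` A).
Proof.
have -> : o i @^-1` A = \bigcup_(x : O) (if `[< A x >] then o i @^-1` [set x] else set0).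
  apply/seteqP; split => w /=.
    by move=> Aw; exists (o i w) => //; rewrite asboolT.
  by move=> [x _]; case: ifPn => // /asboolP Ax ->.
apply: countable_bigcupT_measurable; first exact: countableP.
by move=> x; case: ifPn.
Qed.

Local Open Scope ereal_scope.

Lemma Po i (A : set O) : P (o i @^-1` A) = \esum_(x in A) (pq x)%:E.
Proof.
pose h (n : nat) : \bar R :=
  if pickle_inv n is Some x then (if x \in A then (pq x)%:E else 0) else 0.
pose F (n : nat) := o i @^-1` [set x | pickle_inv n = Some x /\ A x].
have h0 : forall n, 0 <= h n.
  by move=> n; rewrite /h; case: pickle_inv => // x; case: ifP => //; rewrite lee_fin.
have PF : forall n, P (F n) = h n.
  move=> n; rewrite /F /h; case E : (pickle_inv n) => [x|]; last first.
    by rewrite (_ : [set _ | _] = set0) ?preimage_set0 ?measure0 //; apply/seteqP; split => y //= [].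
  case: ifPn => [/set_mem Ax|/negP nAx].
    rewrite (_ : [set _ | _] = [set x]) ?Po1 //; apply/seteqP; split => y /=.
      by move=> [[->]].
    by move=> ->.
  rewrite (_ : [set _ | _] = set0) ?preimage_set0 ?measure0 //; apply/seteqP; split => y //= [[<-]] Ax.
  by apply: nAx; rewrite inE.
have mF : forall n, measurable (F n) by move=> n; exact: mo.
have UF : o i @^-1` A = \bigcup_n F n.
  apply/seteqP; split => w /=.
    by move=> Aw; exists (pickle (o i w)) => //; rewrite /F /= pickleK_inv.
  by move=> [n _ [_]].
have tF : trivIset setT F.
  move=> n m _ _ [w [/= [En _] [Em _]]].
  have hn := @pickle_invK O n; have hm := @pickle_invK O m.
  by rewrite En /= in hn; rewrite Em /= in hm; rewrite -hn -hm.
rewrite UF measure_semi_bigcup //; last by rewrite -UF; exact: mo.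
rewrite (eq_eseriesr (fun n _ => PF n)) nneseries_esumT //.
transitivity (\esum_(x in [set: O]) h (pickle x)); last first.
  by rewrite [RHS]esum_mkcond; apply: eq_esum => x _; rewrite /h pickleK_inv.
have E2 : \esum_(j in range (@pickle O)) h j = \esum_(x in [set: O]) h (pickle x).
  rewrite (esum_image setT (@pickle O) h) //.
rewrite -E2 [RHS]esum_mkcond; apply: eq_esum => n _.
case: ifPn => // /negP nr; rewrite /h; case E: pickle_inv => [x|] //.
exfalso; apply: nr; rewrite inE; exists x => //.
by have := @pickle_invK O n; rewrite E.
Qed.
End Prob.
Section Prob2.
Context {R : realType} {d : measure_display} {T : measurableType d}
  (P : probability T R) (xi : T -> R).
Hypothesis mxi : measurable_fun [set: T] xi.
Hypothesis Pxi : forall (B : set R), measurable B ->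
         P (xi @^-1` B) = lebesgue_measure (B `&` `[0%R, 1%R]%classic).

Lemma mxiB (B : set R) : measurable B -> measurable (xi @^-1` B).
Proof. by move=> mB; rewrite -[_ @^-1` _]setTI; apply: mxi. Qed.

Lemma le_itv (c : R) : [set x | x <= c] = `]-oo, c]%classic.
Proof. by apply/seteqP; split => x /=; rewrite in_itv /=. Qed.

Lemma mle (c : R) : measurable [set x : R | x <= c].
Proof. by rewrite le_itv; exact: measurable_itv. Qed.


Lemma Pxi_le (c : R) : (0 <= c <= 1)%R -> P (xi @^-1` [set x | x <= c]) = c%:E.
Proof.
move=> /andP[c0 c1]; rewrite Pxi ?mle //.
have -> : [set x : R | x <= c] `&` `[0%R, 1%R]%classic = `[0%R, c]%classic.
  apply/seteqP; split => x /=; rewrite !in_itv /=.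
    by move=> [xc /andP[-> _]].
  by move=> /andP[x0 xc]; split => //; rewrite x0 /= (le_trans xc).
rewrite lebesgue_measure_itv /= lte_fin.
case: ltP => [_|c0']; first by rewrite oppr0 adde0.
have -> : c = 0%R by apply/le_anti/andP.
by [].
exact: mle.
Qed.

Lemma Pxi_gt (c : R) : (0 <= c <= 1)%R -> P (xi @^-1` [set x | (x <= c) = false]) = (1 - c)%:E.
Proof.
move=> hc; have -> : [set x : R | (x <= c) = false] = ~` [set x | x <= c].
  by apply/seteqP; split => x /=; [move=> -> | move/negP/negbTE].
rewrite (_ : xi @^-1` (~` [set x | x <= c]) = ~` (xi @^-1` [set x | x <= c])) //.
rewrite probability_setC ?Pxi_le //.
by apply: mxiB; exact: mle.
Qed.
End Prob2.
Section VarAlg.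
Variable R : realType.

Lemma var_alg n (y : 'I_n -> R) (a D : R) : (0 < n)%N -> D != 0 ->
  (forall i, y i ^+ 2 = y i) ->
  \sum_i ((y i - a) / D - n%:R^-1 * \sum_j ((y j - a) / D)) ^+ 2 =
  ((\sum_i y i) - (\sum_i y i) ^+ 2 / n%:R) / D ^+ 2.
Proof.
move=> n0 D0 hy.
have nz : n%:R != 0 :> R by rewrite pnatr_eq0 -lt0n.
set K := \sum_i y i.
have S1 : \sum_j ((y j - a) / D) = (K - n%:R * a) / D.
  by rewrite -mulr_suml sumrB sumr_const card_ord mulr_natl.
rewrite S1.
set m := n%:R^-1 * ((K - n%:R * a) / D).
set c1 := (1 - 2 * a) / D ^+ 2 - 2 * m / D.
set c0 := a ^+ 2 / D ^+ 2 + 2 * a * m / D + m ^+ 2.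
rewrite (eq_bigr (fun i => y i * c1 + c0)); last first.
  move=> i _.
  have -> : y i * c1 + c0 = y i ^+ 2 / D ^+ 2 + y i * (c1 - 1 / D ^+ 2) + c0.
    by rewrite hy; field.
  by rewrite /c1 /c0; field.
rewrite big_split /= -mulr_suml sumr_const card_ord -/K.
rewrite /c1 /c0 /m -mulr_natl; field; apply/andP; split => //.
Qed.
End VarAlg.
Definition Zf {R : realType} (a b : R) (n : nat) (K : R) : R :=
  (n.-1%:R)^-1 * ((K - K ^+ 2 / n%:R) / (1 - a - b) ^+ 2)
  - (K / n%:R - a) / (1 - a - b) * b * (1 - b) / (1 - a - b) ^+ 2
  - (1 - (K / n%:R - a) / (1 - a - b)) * a * (1 - a) / (1 - a - b) ^+ 2.

Lemma corrE {R : realType} {O : countType} (rs : O -> bool) (a b : R) x y :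
  corr_reward rs a b x y =
  ((if rs x then y <= 1 - b else y <= a)%:R - a) / (1 - a - b).
Proof. by rewrite /corr_reward /obs_reward; case: (rs x) => /=; rewrite ?subrr ?mul0r ?add0r ?mul1r ?addr0 ?subr0 ?mul1r. Qed.

Lemma ZE {R : realType} {T : Type} {O : countType} (rs : O -> bool) (a b : R) (o : nat -> T -> O)
  (xi : nat -> T -> R) n w : (0 < n)%N -> 1 - a - b != 0 ->
  Z_est rs a b n (fun i => o i w) (fun i => xi i w) =
  Zf a b n (\sum_(i < n) ((if rs (o i w) then xi i w <= 1 - b else xi i w <= a) : bool)%:R).
Proof.
move=> n0 D0.
have nz : n%:R != 0 :> R by rewrite pnatr_eq0 -lt0n.
rewrite /Z_est /var_hat /rbar.
pose y := fun i : 'I_n => (((if rs (o i w) then xi i w <= 1 - b else xi i w <= a) : bool)%:R : R).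
have hc : forall i : 'I_n, corr_reward rs a b (o i w) (xi i w) = (y i - a) / (1 - a - b).
  by move=> i; rewrite corrE.
have hS : \sum_(i < n) corr_reward rs a b (o i w) (xi i w) = \sum_(i < n) (y i - a) / (1 - a - b).
  by apply: eq_bigr => i _; exact: hc.
rewrite !hS.
under eq_bigr do rewrite hc.
rewrite var_alg //; last by move=> i; rewrite /y; case: ifP => _; case: (_ <= _); rewrite ?expr1n ?expr0n.
rewrite -mulr_suml sumrB sumr_const card_ord -/(\sum_(i < n) y i).
rewrite /Zf; set K := \sum_(i < n) y i.
congr (_ - _ - _); rewrite -mulr_natl; field; apply/andP; split => //.
Qed.
Section Final.
Variable R : realType.

Lemma EZf (a b p : R) n : (2 <= n)%N -> 1 - a - b != 0 ->
  \sum_(s : {ffun 'I_n -> bool}) Zf a b n (Kf s) * Wf (p * (1 - b) + (1 - p) * a) s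
  = p * (1 - p).
Proof.
case: n => [//|[//|m]] _ D0.
set mu := p * (1 - b) + (1 - p) * a.
set D := 1 - a - b.
have m0 : (0 : R) <= m%:R := ler0n _ _.
have m1 : (1 + m%:R : R) != 0 by apply/lt0r_neq0; lra.
have m2 : (2 + m%:R : R) != 0 by apply/lt0r_neq0; lra.
pose u2 : R := - ((m.+1%:R)^-1 / m.+2%:R / D ^+ 2).
pose u1 : R := (m.+1%:R)^-1 / D ^+ 2 - b * (1 - b) / (m.+2%:R * D ^+ 3)
   + a * (1 - a) / (m.+2%:R * D ^+ 3).
pose u0 : R := a * b * (1 - b) / D ^+ 3 - a * (1 - a) / D ^+ 2 - a * a * (1 - a) / D ^+ 3.
have hz : forall K, Zf a b m.+2 K = u0 + u1 * K + u2 * K ^+ 2.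
  move=> K; rewrite /Zf /u0 /u1 /u2 -/D /=; field; rewrite -/D D0 m1 m2 //.
transitivity (\sum_(s : {ffun 'I_(m.+2) -> bool})
   (u0 * Wf mu s + u1 * (Kf s * Wf mu s) + u2 * (Kf s ^+ 2 * Wf mu s))).
  by apply: eq_bigr => s _; rewrite hz; ring.
rewrite !big_split /= -!mulr_sumr sumW sumKW sumK2W.
rewrite /u0 /u1 /u2 /mu /D; field.
by rewrite D0 m1 m2.
Qed.
End Final.
Section Lim.
Variable R : realType.

Lemma Zlim (a b p : R) (K : nat -> R) : 1 - a - b != 0 ->
  (fun n => K n / n%:R) @ \oo --> (p * (1 - b) + (1 - p) * a) ->
  (fun n => Zf a b n (K n)) @ \oo --> p * (1 - p).
Proof.
move=> D0 hK.
set mu := p * (1 - b) + (1 - p) * a in hK.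
set D := 1 - a - b.
rewrite -(cvg_shiftn 2) /= in hK; rewrite -(cvg_shiftn 2) /=.
pose x m := K (m + 2)%N / (m + 2)%N%:R.
pose c2 : R := (D ^+ 2)^-1.
pose c1 : R := - (b * (1 - b)) / D ^+ 3 + a * (1 - a) / D ^+ 3.
pose c0 : R := a * b * (1 - b) / D ^+ 3 - a * (1 - a) / D ^+ 2 - a * a * (1 - a) / D ^+ 3.
have -> : (fun m => Zf a b (m + 2) (K (m + 2)%N)) =
    (fun m => (1 + harmonic m) * (c2 * (x m - x m * x m)) + (c0 + c1 * x m)).
  apply/funext => m; rewrite /Zf /x /c0 /c1 /c2 /harmonic /= addn2 /= -/D.
  have m0 : (0 : R) <= m%:R := ler0n _ _.
  have m1 : (1 + m%:R : R) != 0 by apply/lt0r_neq0; lra.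
  have m2 : (2 + m%:R : R) != 0 by apply/lt0r_neq0; lra.
  by field; rewrite D0 m1 m2.
have -> : p * (1 - p) = (1 + 0) * (c2 * (mu - mu * mu)) + (c0 + c1 * mu).
  by rewrite /c0 /c1 /c2 /mu /D; field.
apply: cvgD.
  apply: cvgM; first by apply: cvgD; [exact: cvg_cst | exact: cvg_harmonic].
  by apply: cvgM; [exact: cvg_cst | apply: cvgB => //; exact: cvgM].
by apply: cvgD; [exact: cvg_cst | apply: cvgM; [exact: cvg_cst | exact: hK]].
Qed.
End Lim.
Section Core.
Context {R : realType} {d : measure_display} {T : measurableType d}
  (P : probability T R) {O : countType} (pq : O -> R)
  (o : nat -> T -> O) (xi : nat -> T -> R) (rs : O -> bool) (a b : R).
Hypothesis ha : 0 <= a <= 1.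
Hypothesis hb : 0 <= b <= 1.
Hypothesis pq0 : forall x, 0 <= pq x.
Hypothesis mo1 : forall i (x : O), measurable (o i @^-1` [set x]).
Hypothesis Po1 : forall i (x : O), P (o i @^-1` [set x]) = (pq x)%:E.
Hypothesis mxi : forall i, measurable_fun [set: T] (xi i).
Hypothesis Pxi : forall i (B : set R), measurable B ->
         P (xi i @^-1` B) = lebesgue_measure (B `&` `[0%R, 1%R]%classic).
Hypothesis Hind : forall n (A : nat -> set O) (B : nat -> set R), (forall i, measurable (B i)) ->
         P (\bigcap_(i in `I_n) (o i @^-1` A i `&` xi i @^-1` B i)) =
         (\prod_(i < n) (P (o i @^-1` A i) * P (xi i @^-1` B i)))%E.

Definition A1 : set O := [set x | rs x].
Definition pp : R := success_prob pq rs.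
Definition Ac (u : bool) := if u then A1 else ~` A1.
Definition th (u : bool) : R := if u then 1 - b else a.
Definition Bc (c : bool * bool) := [set x : R | (x <= th c.1) = c.2].
Definition rp (c : bool * bool) : R :=
  (if c.1 then pp else 1 - pp) * (if c.2 then th c.1 else 1 - th c.1).
Definition Rect k c := o k @^-1` Ac c.1 `&` xi k @^-1` Bc c.
Definition Ub k t := Rect k (true, t) `|` Rect k (false, t).
Definition mmu : R := pp * (1 - b) + (1 - pp) * a.
Definition Dm m (c : nat -> bool * bool) (s : nat -> bool) k :=
  if (k < m)%N then Rect k (c k) else Ub k (s k).
Definition dq m (c : nat -> bool * bool) (s : nat -> bool) k :=
  if (k < m)%N then rp (c k) else wt mmu (s k).

Lemma PA1 i : P (o i @^-1` A1) = pp%:E.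
Proof.
rewrite (Po mo1 Po1 pq0) /pp /success_prob.
have -> : \esum_(x in [set: O]) (pq x * (rs x)%:R)%:E = \esum_(x in A1) (pq x)%:E.
  rewrite [RHS]esum_mkcond; apply: eq_esum => x _.
  rewrite /A1 mem_setE (_ : (x \in rs) = rs x) //.
  by case: (rs x); rewrite ?mulr1 ?mulr0.
symmetry; apply: fineK; rewrite -(Po mo1 Po1 pq0 i).
apply: (fin_num_measure P); exact: (mo mo1).
Qed.

Lemma thP u : 0 <= th u <= 1.
Proof. by rewrite /th; case: u; [move: hb => /andP[? ?]; apply/andP; split; lra | ]. Qed.

Lemma PAc i u : P (o i @^-1` Ac u) = (if u then pp else 1 - pp)%:E.
Proof.
case: u; first exact: PA1.
rewrite /Ac /= (_ : o i @^-1` (~` A1) = ~` (o i @^-1` A1)) //.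
by rewrite probability_setC ?PA1 //; exact: (mo mo1).
Qed.

Lemma mBc c : measurable (Bc c).
Proof.
case: c => u [] /=; first exact: mle.
rewrite (_ : Bc _ = ~` [set x | x <= th u]); first by apply: measurableC; exact: mle.
by apply/seteqP; split => x /=; [move=> -> | move/negP/negbTE].
Qed.

Lemma PBc i c : P (xi i @^-1` Bc c) = (if c.2 then th c.1 else 1 - th c.1)%:E.
Proof.
case: c => u [] /=.
  exact: (Pxi_le (Pxi i) (thP u)).
exact: (Pxi_gt (mxi i) (Pxi i) (thP u)).
Qed.

Lemma mRect k c : measurable (Rect k c).
Proof.
apply: measurableI; first exact: (mo mo1).
by apply: (mxiB (mxi k)); exact: mBc.
Qed.

Lemma mUb k t : measurable (Ub k t).
Proof. by apply: measurableU; exact: mRect. Qed.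

Lemma mDm m c s k : measurable (Dm m c s k).
Proof. by rewrite /Dm; case: ifP => _; [exact: mRect|exact: mUb]. Qed.

Lemma rp_wt t : rp (true, t) + rp (false, t) = wt mmu t.
Proof. by rewrite /rp /wt /mmu /th; case: t => /=; ring. Qed.

Lemma Gind j : forall m n c s, (n <= m + j)%N ->
  P (\bigcap_(k in `I_n) Dm m c s k) = (\prod_(k < n) dq m c s k)%:E.
Proof.
elim: j => [|j IH] m n c s hn.
  rewrite addn0 in hn.
  have -> : \bigcap_(k in `I_n) Dm m c s k =
      \bigcap_(k in `I_n) (o k @^-1` Ac (c k).1 `&` xi k @^-1` Bc (c k)).
    apply: eq_bigcapr => k /= kn; rewrite /Dm (leq_trans kn hn) //.
  rewrite Hind; last by move=> i; exact: mBc.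
  rewrite -prodEFin; apply: eq_bigr => k _.
  by rewrite PAc PBc -EFinM /dq (leq_trans (ltn_ord k) hn).
case: (leqP n (m + j)) => hnj; first exact: IH.
have mn : (m < n)%N by apply: leq_ltn_trans (leq_addr j m) hnj.
pose cT k := if k == m then (true, s m) else c k.
pose cF k := if k == m then (false, s m) else c k.
have hn' : (n <= m.+1 + j)%N by rewrite addSn -addnS.
have eT : forall k, k != m -> Dm m.+1 cT s k = Dm m c s k.
  by move=> k km; rewrite /Dm ltnS leq_eqVlt (negbTE km) /= /cT (negbTE km).
have eF : forall k, k != m -> Dm m.+1 cF s k = Dm m c s k.
  by move=> k km; rewrite /Dm ltnS leq_eqVlt (negbTE km) /= /cF (negbTE km).
have mT : Dm m.+1 cT s m = Rect m (true, s m) by rewrite /Dm ltnSn /cT eqxx.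
have mF : Dm m.+1 cF s m = Rect m (false, s m) by rewrite /Dm ltnSn /cF eqxx.
have mm : Dm m c s m = Ub m (s m) by rewrite /Dm ltnn.
have -> : \bigcap_(k in `I_n) Dm m c s k =
  \bigcap_(k in `I_n) Dm m.+1 cT s k `|` \bigcap_(k in `I_n) Dm m.+1 cF s k.
  apply/seteqP; split => w.
    move=> Hw; have := Hw m mn; rewrite mm => -[hT|hF]; [left|right] => k kn;
      (case: (eqVneq k m) => [->|km]; [by rewrite ?mT ?mF | by rewrite ?eT ?eF //; exact: Hw]).
  move=> [Hw|Hw] k kn; (case: (eqVneq k m) => [->|km];
    [rewrite mm; have := Hw m mn; rewrite ?mT ?mF => h; by [left|right]
    | have := Hw k kn; by rewrite ?eT ?eF]).
have hU : P (\bigcap_(k in `I_n) Dm m.+1 cT s k `|` \bigcap_(k in `I_n) Dm m.+1 cF s k) =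
   (P (\bigcap_(k in `I_n) Dm m.+1 cT s k) + P (\bigcap_(k in `I_n) Dm m.+1 cF s k))%E.
  apply: measureU.
  - apply: bigcap_measurableType => k _; exact: mDm.
  - apply: bigcap_measurableType => k _; exact: mDm.
  - apply/seteqP; split => w //= [H1 H2].
    have := H1 m mn; have := H2 m mn; rewrite mT mF => -[h2 _] [h1 _].
    by move: h1 h2; rewrite /Ac /=.
rewrite hU.
rewrite (IH m.+1 n cT s hn') (IH m.+1 n cF s hn') -EFinD; congr EFin.
rewrite (bigD1 (Ordinal mn)) //= [X in _ + X](bigD1 (Ordinal mn)) //=.
rewrite [X in _ = X](bigD1 (Ordinal mn)) //=.
have e : forall cc, cc m = c m \/ True -> (forall k, k != m -> cc k = c k) ->
  \prod_(i < n | i != Ordinal mn) dq m.+1 cc s i = \prod_(i < n | i != Ordinal mn) dq m c s i.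
  move=> cc _ hcc; apply: eq_bigr => i hi.
  have hne : (val i != m) by apply: contra hi => /eqP h; apply/eqP/val_inj.
  by rewrite /dq ltnS leq_eqVlt (negbTE hne) /= hcc.
rewrite !e; last 4 first.
- by right.
- by move=> k hk; rewrite /cF (negbTE hk).
- by right.
- by move=> k hk; rewrite /cT (negbTE hk).
rewrite -mulrDl; congr (_ * _).
by rewrite /dq /cT /cF ltnSn ltnn !eqxx rp_wt.
Qed.

Definition Yb k w : bool := if rs (o k w) then xi k w <= 1 - b else xi k w <= a.

Lemma UbE k t : Ub k t = [set w | Yb k w = t].
Proof.
apply/seteqP; split => w /=; rewrite /Yb.
  by move=> [[h1 h2]|[h1 h2]]; move: h1 h2; rewrite /Ac /A1 /Bc /th /=;
     [move=> -> | move=> /negP/negbTE ->].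
case E : (rs (o k w)) => h; [left|right]; split => //=.
by rewrite /Ac /A1 /= E.
Qed.

Lemma mYb k t : measurable [set w | Yb k w = t].
Proof. by rewrite -UbE; exact: mUb. Qed.

Lemma PEv n (s : nat -> bool) :
  P (\bigcap_(k in `I_n) [set w | Yb k w = s k]) = (\prod_(k < n) wt mmu (s k))%:E.
Proof.
have := @Gind n 0 n (fun _ => (true, true)) s (leqnn n).
have -> : \bigcap_(k in `I_n) Dm 0 (fun _ => (true, true)) s k =
          \bigcap_(k in `I_n) [set w | Yb k w = s k].
  by apply: eq_bigcapr => k _; rewrite /Dm /= UbE.
by move=> ->; congr EFin; apply: eq_bigr => k _; rewrite /dq.
Qed.

Definition Yv n (w : T) : {ffun 'I_n -> bool} := [ffun i : 'I_n => Yb (nat_of_ord i) w].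
Definition Ev n (s : {ffun 'I_n -> bool}) := [set w | Yv n w = s].

Lemma EvE n (s : {ffun 'I_n -> bool}) :
  Ev s = \bigcap_(k in `I_n) [set w | Yb k w = (if insub k is Some i then s i else false)].
Proof.
apply/seteqP; split => w /=.
  move=> <- k kn; rewrite insubT /= ffunE //.
move=> H; apply/ffunP => i; rewrite ffunE.
have := H i (ltn_ord i); rewrite /= (insubT (fun k => k < n)%N (ltn_ord i)) /=.
by rewrite (_ : Sub _ _ = i) //; apply: val_inj.
Qed.

Lemma mEv n (s : {ffun 'I_n -> bool}) : measurable (Ev s).
Proof. by rewrite EvE; apply: bigcap_measurableType => k _; exact: mYb. Qed.

Lemma PEvW n (s : {ffun 'I_n -> bool}) : P (Ev s) = (Wf mmu s)%:E.
Proof.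
rewrite EvE PEv; congr EFin; apply: eq_bigr => i _.
by rewrite (insubT (fun k => k < n)%N (ltn_ord i)) /= (_ : Sub _ _ = i) //; apply: val_inj.
Qed.

Lemma Eg n (g : {ffun 'I_n -> bool} -> R) :
  ('E_P[fun w => g (Yv n w)])%E = (\sum_(s : {ffun 'I_n -> bool}) g s * Wf mmu s)%:E.
Proof.
have pw : forall w, (g (Yv n w))%:E =
   (\sum_(s : {ffun 'I_n -> bool}) ((g s)%:E * (\1_(Ev s) w)%:E))%E.
  move=> w; rewrite (bigD1 (Yv n w)) //= big1 ?adde0.
    by rewrite indicE mem_set // mule1.
  move=> s hs; rewrite indicE memNset ?mule0 //= => h.
  by move: hs; rewrite h eqxx.
rewrite unlock.
under eq_integral do rewrite pw.
rewrite integral_sum //; last first.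
  by move=> s; apply: integrableZl => //; apply: integrable_indic; exact: mEv.
rewrite -sumEFin; apply: eq_bigr => s _.
rewrite integralZl //; last by apply: integrable_indic; exact: mEv.
rewrite integral_indic ?setIT; last exact: mEv.
rewrite EFinM; congr (_ * _)%E; first exact: PEvW.
exact: measurableT.
Qed.

Lemma pp01 : 0 <= pp <= 1.
Proof.
have h0 : (0 <= P (o 0 @^-1` A1))%E := measure_ge0 P _.
have h1 : (P (o 0 @^-1` A1) <= 1)%E := probability_le1 P (mo mo1 0 A1).
rewrite PA1 in h0 h1; rewrite -!lee_fin; by apply/andP.
Qed.

Lemma mmu01 : 0 <= mmu <= 1.
Proof.
have /andP[p0 p1] := pp01; move: ha hb => /andP[a0 a1] /andP[b0 b1].
rewrite /mmu; apply/andP; split; nra.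
Qed.

Lemma PPhi n (Phi : pred {ffun 'I_n -> bool}) :
  P [set w | Phi (Yv n w)] =
  (\sum_(s : {ffun 'I_n -> bool}) (if Phi s then 1 else 0) * Wf mmu s)%:E.
Proof.
have mA : measurable [set w | Phi (Yv n w)].
  have -> : [set w | Phi (Yv n w)] = \bigcup_(s in [set s | Phi s]) Ev s.
    apply/seteqP; split => w /=; first by move=> h; exists (Yv n w).
    by move=> [s hs /= ->].
  apply: fin_bigcup_measurable; first exact: finite_finset.
  by move=> s _; exact: mEv.
transitivity ('E_P[\1_[set w | Phi (Yv n w)]])%E.
  by rewrite expectation_indic.
rewrite -(Eg (fun s => if Phi s then 1 else 0)); congr expectation; apply/funext => w.
rewrite indicE; case: ifP => h; first by rewrite mem_set.
by rewrite memNset //= h.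
Qed.

Lemma geo_fin (r : R) (F : nat -> set T) : 0 < r < 1 ->
  (forall n, P (F n) <= (2 * r ^+ n)%:E)%E ->
  (\sum_(n <oo) P (F n) < +oo)%E.
Proof.
move=> /andP[r0 r1] hF.
apply: (@le_lt_trans _ _ (2 / (1 - r))%:E); last exact: ltry.
apply: lime_le; first by apply: is_cvg_nneseries => n _ _; exact: measure_ge0.
apply: nearW => n.
apply: (@le_trans _ _ (\sum_(0 <= i < n) (2 * r ^+ i)%:E)%E).
  by apply: lee_sum => i _; exact: hF.
rewrite sumEFin lee_fin.
have := geometric_le_lim n (_ : 0 <= 2) r0 (_ : `|r| < 1).
rewrite /series /=; apply; first by [].
by rewrite ger0_norm ?ltW.
Qed.

Lemma mPhi n (Phi : pred {ffun 'I_n -> bool}) : measurable [set w | Phi (Yv n w)].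
Proof.
have -> : [set w | Phi (Yv n w)] = \bigcup_(s in [set s | Phi s]) Ev s.
  apply/seteqP; split => w /=; first by move=> h; exists (Yv n w).
  by move=> [s hs /= ->].
apply: fin_bigcup_measurable; first exact: finite_finset.
by move=> s _; exact: mEv.
Qed.

Lemma as_cvg : {ae P, forall w, (fun n => Kf (Yv n w) / n%:R) @ \oo --> mmu}.
Proof.
pose eps (k : nat) : R := (k.+1%:R)^-1.
have e01 : forall k, 0 < eps k <= 1.
  by move=> k; rewrite /eps invr_gt0 ltr0n /= invf_le1 ?ler1n ?ltr0n.
pose A k n := [set w | eps k <= `|Kf (Yv n w) / n%:R - mmu|].
have mA : forall k n, measurable (A k n).
  by move=> k n; exact: (mPhi (fun s => eps k <= `|Kf s / n%:R - mmu|)).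
have PA : forall k n, (P (A k n) <= (2 * rr (eps k) ^+ n)%:E)%E.
  move=> k n.
  have -> : P (A k n) = (\sum_(s : {ffun 'I_n -> bool})
     (if eps k <= `|Kf s / n%:R - mmu| then 1 else 0) * Wf mmu s)%:E.
    exact: (PPhi (fun s => eps k <= `|Kf s / n%:R - mmu|)).
  rewrite lee_fin; case: n => [|n].
    apply: (le_trans (y := \sum_(s : {ffun 'I_0 -> bool}) Wf mmu s)).
      apply: ler_sum => s _; case: ifP => _; rewrite ?mul1r ?mul0r //.
      exact: Wf_ge0 mmu01.
    by rewrite sumW expr0 mulr1 ler1n.
  by apply: tail => //; exact: mmu01.
have r01 : forall k, 0 < rr (eps k) < 1.
  move=> k; have /andP[e0 _] := e01 k.
  have x0 : 0 < eps k ^+ 2 by rewrite exprn_gt0.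
  rewrite /rr; apply/andP; split; first by apply: divr_gt0; lra.
  by rewrite ltr_pdivrMr; lra.
have N0 : forall k, P.-negligible (lim_sup_set (A k)).
  move=> k; exists (lim_sup_set (A k)); split => //.
    apply: bigcap_measurableType => n _; apply: bigcup_measurable => j _; exact: mA.
  apply: lim_sup_set_cvg0; first by move=> n; exact: mA.
  exact: geo_fin (r01 k) (PA k).
apply: (negligibleS _ (negligible_bigcup N0)).
move=> w /= ncv; apply: contrapT => nU; apply: ncv.
apply/cvgrPdist_lt => e e0.
have [k hk] : exists k, eps k < e.
  have := near_infty_natSinv_lt (PosNum e0); case => N _ hN.
  by exists N; exact: (hN N (leqnn N)).
have hlim : ~ lim_sup_set (A k) w by move=> h; apply: nU; exists k.
have [n0 hn0] : exists n0, forall j, (n0 <= j)%N -> ~ A k j w.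
  apply: contrapT => hne; apply: hlim => n _; apply: contrapT => hne2; apply: hne.
  by exists n => j hj Ajw; apply: hne2; exists j.
exists n0 => // j /= hj.
have := hn0 j hj; rewrite /A /= => /negP; rewrite -ltNge => h.
by rewrite distrC; apply: lt_trans h hk.
Qed.
End Core.
Unset Implicit Arguments.

Theorem proposition4 (R : realType) (Q : Type) (O : countType)
    (rstar : Q -> O -> bool) (rhop rhom : Q -> R) (pik : Q -> O -> R) (q : Q)
    (d : measure_display) (T : measurableType d) (P : probability T R)
    (o : nat -> T -> O) (xi : nat -> T -> R) :
  (forall q', 0 <= rhop q' <= 1 /\ 0 <= rhom q' <= 1) ->
  (forall q', is_pmf (pik q')) ->
  1 - rhop q - rhom q != 0 ->
  iid_samples P (pik q) o xi ->
  let p := success_prob (pik q) (rstar q) in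
  let Z := fun (n : nat) (w : T) =>
    Z_est (rstar q) (rhop q) (rhom q) n (fun i => o i w) (fun i => xi i w) in
  (forall n : nat, (2 <= n)%N -> ('E_P[Z n])%E = (p * (1 - p))%:E) /\
  {ae P, forall w, (fun n => Z n w) @ \oo --> (p * (1 - p) : R)}.
Proof.
move=> Hrho Hpmf HD [mo1 mxi Po1 Pxi Hind] p Z.
have [ha hb] := Hrho q.
have pq0 : forall x, 0 <= pik q x by case: (Hpmf q).
have hZ : forall n w, (0 < n)%N -> Z n w =
    Zf (rhop q) (rhom q) n (Kf (Yv o xi (rstar q) (rhop q) (rhom q) n w)).
  move=> n w n0; rewrite /Z ZE //; congr Zf; apply: eq_bigr => i _.
  by rewrite ffunE.
split.
  move=> n n2.
  have -> : Z n = (fun w => (fun s => Zf (rhop q) (rhom q) n (Kf s))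
                     (Yv o xi (rstar q) (rhop q) (rhom q) n w)).
    by apply/funext => w; rewrite hZ // (leq_trans _ n2).
  rewrite (Eg (rstar q) ha hb pq0 mo1 Po1 mxi Pxi Hind (fun s => Zf (rhop q) (rhom q) n (Kf s))); congr EFin.
  by rewrite /mmu; exact: EZf.
apply: filterS (as_cvg (rstar q) ha hb pq0 mo1 Po1 mxi Pxi Hind) => w hw /=.
have hL := Zlim HD hw.
rewrite -(cvg_shiftn 1) /= in hL; rewrite -(cvg_shiftn 1) /=.
have -> : (fun n => Z (n + 1)%N w) =
   (fun n => Zf (rhop q) (rhom q) (n + 1)
        (Kf (Yv o xi (rstar q) (rhop q) (rhom q) (n + 1) w))).
  by apply/funext => n; rewrite hZ // addn1.
exact: hL.
Qed.
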